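(* Let $a_1,\ldots,a_n$ be relatively prime positive integers, let $\mathcal{S}=\langle a_1,\ldots,a_n\rangle$, and let $e$ be a positive integer with $\gcd(e,a_1)=1$. Put $\mathcal{S}^e=\langle a_1,ea_2,\ldots,ea_n\rangle$. Then $\mathrm{type}(\mathcal{S})=\mathrm{type}(\mathcal{S}^e)$.
   Context: For positive integers $b_1,\ldots,b_t$ with $\gcd(b_1,\ldots,b_t)=1$, $\langle b_1,\ldots,b_t\rangle$ denotes the numerical semigroup of all non-negative integer linear combinations of $b_1,\ldots,b_t$. For a numerical semigroup $\mathcal{S}$, a pseudo-Frobenius number is an integer $x\notin\mathcal{S}$ such that $x+s\in\mathcal{S}$ for all $s\in\mathcal{S}$ with $s>0$ (equivalently, for all nonzero $s \in \mathcal{S}$); the type $\mathrm{type}(\mathcal{S})$ is the number of pseudo-Frobenius numbers of $\mathcal{S}$. *)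

(* Defs.v *)
From mathcomp Require Import all_boot all_order all_algebra.
Set Implicit Arguments. Unset Strict Implicit. Unset Printing Implicit Defensive.
Import Order.TTheory GRing.Theory Num.Theory.

Definition in_sg (b : seq nat) (x : int) : Prop :=
  exists c : seq nat, size c = size b /\
    x = Posz (\sum_(i < size b) nth 0 c i * nth 0 b i)%N.

Definition pseudo_frobenius (b : seq nat) (x : int) : Prop :=
  ~ in_sg b x /\ forall s : int, in_sg b s -> (0 < s)%R -> in_sg b (x + s)%R.

Definition sg_type_is (b : seq nat) (k : nat) : Prop :=
  exists l : seq int, uniq l /\ (forall x, x \in l <-> pseudo_frobenius b x)
                      /\ size l = k.

(* Main.v *)
Require Import Defs.
From mathcomp Require Import all_boot all_order all_algebra.
From mathcomp Require Import zify.
From Stdlib Require Import Classical.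
Import Order.TTheory GRing.Theory Num.Theory.

Definition inT (s : seq nat) (t : nat) : Prop :=
  exists c : seq nat, size c = size s /\
    t = (\sum_(i < size s) nth 0 c i * nth 0 s i)%N.

Lemma in_sg_cons a s x : in_sg (a :: s) x <->
  exists c0 t, inT s t /\ x = Posz (c0 * a + t).
Proof.
split.
- move=> [c [Hs ->]]. case: c Hs => [|c0 c] //= [Hs].
  exists c0, (\sum_(i < size s) nth 0 c i * nth 0 s i)%N. split; first by exists c.
  rewrite big_ord_recl /=. do 2 f_equal.
- move=> [c0 [t [[c [Hs ->]] ->]]]. exists (c0 :: c); split; first by rewrite /= Hs.
  rewrite big_ord_recl /=. do 2 f_equal.
Qed.

Lemma inT_map s e t' : inT (map (fun x => e * x) s) t' <-> exists t, inT s t /\ t' = e * t.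
Proof.
have H : forall c, (\sum_(i < size (map (fun x => e * x) s)) nth 0 c i * nth 0 (map (fun x => e * x) s) i
   = e * \sum_(i < size s) nth 0 c i * nth 0 s i)%N.
  move=> c. rewrite big_distrr /=.
  rewrite (big_ord_widen_cond (size s) (fun _ => true) (fun i => nth 0 c i * nth 0 (map (fun x => e * x) s) i)) ?size_map //.
  rewrite (big_ord_widen_cond (size s) (fun _ => true) (fun i => e * (nth 0 c i * nth 0 s i))) //.
  apply: eq_bigr => i /andP [Hi _]. rewrite (nth_map 0) //. lia.
split.
- move=> [c [Hs ->]]. exists (\sum_(i < size s) nth 0 c i * nth 0 s i)%N.
  split; last exact: H. exists c; split => //. by rewrite Hs size_map.
- move=> [t [[c [Hs ->]] ->]]. exists c; split; first by rewrite size_map.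
  by rewrite H.
Qed.

Lemma inT0 s : inT s 0.
Proof.
exists (nseq (size s) 0); rewrite size_nseq; split => //.
rewrite big1 // => i _. by rewrite nth_nseq; case: ifP.
Qed.

Lemma inTD s t t' : inT s t -> inT s t' -> inT s (t + t').
Proof.
move=> [c [Hc ->]] [c' [Hc' ->]].
exists (mkseq (fun i => nth 0 c i + nth 0 c' i) (size s)); rewrite size_mkseq; split => //.
rewrite -big_split /=. apply: eq_bigr => i _. rewrite nth_mkseq //. lia.
Qed.

Lemma dvd_step {e a N m M} : coprime e a -> e * N = m * a + e * M -> exists q, m = q * e.
Proof.
move=> Hco Heq. have : e %| m * a.
  have -> : m * a = e * (N - M) by rewrite mulnBr; lia.
  exact: dvdn_mulr.
rewrite Gauss_dvdl // => /dvdnP [q ->]. by exists q.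
Qed.

Lemma fin_enum (P : int -> Prop) (g : int -> nat) n :
  (forall x y, P x -> P y -> g x = g y -> x = y) -> (forall x, P x -> g x < n) ->
  exists l, uniq l /\ forall x, x \in l <-> P x.
Proof.
move=> Hinj Hb.
suff: forall m, exists l, uniq l /\ forall x, x \in l <-> P x /\ g x < m.
  move=> /(_ n) [l [Hu Hl]]; exists l; split => // x; rewrite Hl.
  split; [by case | by move=> Hx; split => //; apply: Hb].
elim=> [|m [l [Hu Hl]]].
  by exists [::]; split => // x; split => //; case.
case: (classic (exists x, P x /\ g x = m)) => [[x0 [Hx0 Hg0]] | Hn].
- exists (x0 :: l); split.
    rewrite /= Hu andbT; apply/negP => /Hl [_]; lia.
  move=> x; rewrite in_cons; split.
  + case/orP => [/eqP -> | /Hl [Hx Hg]]; split => //; lia.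
  + move=> [Hx Hg]. case: (ltnP (g x) m) => Hg'.
      by apply/orP; right; apply/Hl.
    have Hm : g x = m by lia.
    apply/orP; left; apply/eqP; apply: Hinj => //; lia.
- exists l; split => // x; rewrite Hl; split; first by case => ? ?; split => //; lia.
  move=> [Hx Hg]; split => //. case: (ltnP (g x) m) => // Hg'.
  exfalso; apply: Hn; exists x; split => //; lia.
Qed.

Lemma size_unique {P : int -> Prop} {l1 l2} :
  uniq l1 -> uniq l2 -> (forall x, x \in l1 <-> P x) -> (forall x, x \in l2 <-> P x) ->
  size l1 = size l2.
Proof.
move=> U1 U2 H1 H2. apply: perm_size. apply: uniq_perm => // x.
apply/idP/idP => [/H1 /H2 | /H2 /H1] //.
Qed.

Lemma cancel_step {e a N m M} : 0 < e -> coprime e a -> e * N = (m + 1) * a + e * M ->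
  exists q, N = a + q * a + M.
Proof.
move=> He Hco Heq. have [q Hq] := dvd_step Hco Heq.
case: q Hq => [|q] Hq; first lia.
exists q. apply/eqP; rewrite -(eqn_pmul2l He); apply/eqP. rewrite Heq Hq. nia.
Qed.

Section Main.
Variables (a1 : nat) (as_ : seq nat) (e : nat).
Hypotheses (Ha1 : 0 < a1) (He : 0 < e) (Hco : coprime e a1).

Let S := in_sg (a1 :: as_).
Let Se := in_sg (a1 :: map (fun x => e * x) as_).

Lemma S_iff x : S x <-> exists c0 t, inT as_ t /\ x = Posz (c0 * a1 + t).
Proof. exact: in_sg_cons. Qed.

Lemma Se_iff x : Se x <-> exists c0 t, inT as_ t /\ x = Posz (c0 * a1 + e * t).
Proof.
rewrite /Se in_sg_cons; split.
- move=> [c0 [t' [/inT_map [t [Ht ->]] ->]]]. by exists c0, t.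
- move=> [c0 [t [Ht ->]]]. exists c0, (e * t); split => //. apply/inT_map. by exists t.
Qed.

Definition f (x : int) : int := (Posz e * (x + Posz a1) - Posz a1)%R.

Lemma forward x : pseudo_frobenius (a1 :: as_) x -> pseudo_frobenius (a1 :: map (fun x => e * x) as_) (f x).
Proof.
move=> [HnS HS]. rewrite -/S -/Se in HnS HS *.
have [d0 [t' [Ht' Hxa]]] : exists d0 t', inT as_ t' /\ (x + Posz a1)%R = Posz (d0 * a1 + t').
  apply/S_iff/HS; last by rewrite ltz_nat.
  apply/S_iff; exists 1, 0; split; [exact: inT0 | by rewrite mul1n addn0].
split.
- move=> /Se_iff [c0 [t [Ht Heq]]]. rewrite /f Hxa in Heq.
  have Heq' : e * (d0 * a1 + t') = (c0 + 1) * a1 + e * t by lia.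
  have [q Hq] := cancel_step He Hco Heq'.
  apply: HnS; apply/S_iff. exists q, t; split => //. lia.
- move=> s /Se_iff [c0 [t [Ht ->]]] Hpos. apply/Se_iff.
  case: c0 Hpos => [|c0] Hpos.
  + have [d1 [t1 [Ht1 H1]]] : exists d1 t1, inT as_ t1 /\ (x + Posz t)%R = Posz (d1 * a1 + t1).
      apply/S_iff/HS; last by lia.
      apply/S_iff; exists 0, t; split => //.
    exists (e * d1 + e - 1), t1; split => //. rewrite /f. nia.
  + exists (e * d0 + c0), (t' + t); split; first exact: inTD.
    rewrite /f. nia.
Qed.

Lemma backward y : pseudo_frobenius (a1 :: map (fun x => e * x) as_) y ->
  exists x, pseudo_frobenius (a1 :: as_) x /\ y = f x.
Proof.
move=> [HnS HS]. rewrite -/S -/Se in HnS HS *.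
have [c0 [t [Ht Hya]]] : exists c0 t, inT as_ t /\ (y + Posz a1)%R = Posz (c0 * a1 + e * t).
  apply/Se_iff/HS; last by rewrite ltz_nat.
  apply/Se_iff; exists 1, 0; split; [exact: inT0 | by rewrite mul1n muln0 addn0].
case: c0 Hya => [|c0] Hya; last first.
  exfalso; apply: HnS; apply/Se_iff; exists c0, t; split => //; lia.
exists (Posz t - Posz a1)%R; split; last by rewrite /f; lia.
split.
- move=> /S_iff [d0 [t' [Ht' Heq]]]. apply: HnS; apply/Se_iff.
  exists (e * d0 + e - 1), t'; split => //. nia.
- move=> s /S_iff [d0 [t' [Ht' ->]]] Hpos. apply/S_iff.
  case: d0 Hpos => [|d0] Hpos.
  + have [c1 [t2 [Ht2 H2]]] : exists c1 t2, inT as_ t2 /\ (y + Posz (e * t'))%R = Posz (c1 * a1 + e * t2).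
      apply/Se_iff/HS; last by nia.
      apply/Se_iff; exists 0, t'; split => //.
    have Heq' : e * (t + t') = (c1 + 1) * a1 + e * t2 by nia.
    have [q Hq] := cancel_step He Hco Heq'.
    exists q, t2; split => //. lia.
  + exists d0, (t + t'); split; first exact: inTD. lia.
Qed.

Lemma finite_pf : exists l, uniq l /\ forall x, x \in l <-> pseudo_frobenius (a1 :: as_) x.
Proof.
apply: (@fin_enum _ (fun x => (absz (x + Posz a1)%R) %% a1) a1); last first.
  by move=> x _; rewrite ltn_mod.
have key : forall x, pseudo_frobenius (a1 :: as_) x ->
    exists t, inT as_ t /\ (x + Posz a1)%R = Posz t /\ ~ S x.
  move=> x [HnS HS]. rewrite -/S in HnS HS.
  have [c0 [t [Ht Hxa]]] : exists c0 t, inT as_ t /\ (x + Posz a1)%R = Posz (c0 * a1 + t).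
    apply/S_iff/HS; last by rewrite ltz_nat.
    apply/S_iff; exists 1, 0; split; [exact: inT0 | by rewrite mul1n addn0].
  case: c0 Hxa => [|c0] Hxa; last first.
    exfalso; apply: HnS; apply/S_iff; exists c0, t; split => //; lia.
  exists t; split => //; split => //; lia.
have half : forall x y, pseudo_frobenius (a1 :: as_) x -> pseudo_frobenius (a1 :: as_) y ->
   (absz (x + Posz a1)%R) %% a1 = (absz (y + Posz a1)%R) %% a1 -> (x <= y)%R -> x = y.
  move=> x y /key [t [Ht [Hx Hnx]]] /key [u [Hu [Hy Hny]]].
  rewrite Hx Hy /= => Hmod Hle.
  have Htu : t <= u by lia.
  have : a1 %| u - t by rewrite -eqn_mod_dvd // Hmod.
  move=> /dvdnP [k Hk].
  case: k Hk => [|k] Hk; first lia.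
  exfalso; apply: Hny; apply/S_iff; exists k, t; split => //; lia.
move=> x y Px Py Hg. case: (lerP x y) => Hxy.
  exact: half.
symmetry; apply: half => //; exact: ltW.
Qed.

End Main.

Theorem proposition1 (a1 : nat) (as_ : seq nat) (e : nat) :
  0 < a1 -> all (fun x => 0 < x) as_ ->
  foldr gcdn 0 (a1 :: as_) = 1 ->
  0 < e -> coprime e a1 ->
  (exists k, sg_type_is (a1 :: as_) k) /\
  (forall k : nat, sg_type_is (a1 :: as_) k <->
                   sg_type_is (a1 :: map (fun x => e * x) as_) k).
Proof.
move=> Ha1 _ _ He Hco.
have [l [Hu Hl]] := finite_pf a1 as_ e Ha1 He Hco.
have Hfinj : injective (f a1 e).
  have He' : (Posz e != 0)%R by rewrite eqz_nat -lt0n.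
  move=> x y; rewrite /f => /addIr /(mulfI He') /addIr //.
have Hl' : forall y, y \in map (f a1 e) l <-> pseudo_frobenius (a1 :: map (fun x => e * x) as_) y.
  move=> y; split.
  - move=> /mapP [x /Hl Hx ->]. exact: (forward a1 as_ e Ha1 He Hco).
  - move=> /(backward a1 as_ e Ha1 He Hco) [x [Hx ->]]. apply: map_f. exact/Hl.
have Hu' : uniq (map (f a1 e) l) by rewrite map_inj_uniq.
split; first by exists (size l), l.
move=> k; split.
- move=> [l1 [U1 [H1 <-]]]. exists (map (f a1 e) l); split => //; split => //.
  rewrite size_map. exact: (size_unique Hu U1 Hl H1).
- move=> [l1 [U1 [H1 <-]]]. exists l; split => //; split => //.
  rewrite -(size_map (f a1 e)). exact: (size_unique Hu' U1 Hl' H1).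
Qed.
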